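(* Let $U(x)=\big(|x|_1-\tfrac{d\lambda'}{\delta'}\big)^2$ and $U^p:=(U)^p$, and let $\mathcal{L}f(x)=\frac{1}{2V}\sum_{i,j=1}^d\Gamma_{i,j}(x)\frac{\partial^2 f}{\partial x_i\partial x_j}(x)+\sum_{i=1}^d b_i(x)\frac{\partial f}{\partial x_i}(x)$. Then for every $p\in\mathbb{N}$ there exist constants $c_p,c_p'>0$ such that $$\mathcal{L}U^p(x)\le -c_pU^p(x)+c_p'\qquad\text{for all } x\in\mathbb{R}_+^d.$$ Furthermore, there exist a compact set $K\subset\mathbb{R}_+^d$, a function $f:\mathbb{R}_+^d\to[1,\infty)$ and positive constants $c_1',c_2'$ such that $$\mathcal{L}U(x)\le -c_1'f(x)+c_2'\mathbf 1_K(x)\qquad\text{for all }x\in\mathbb{R}_+^d.$$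
   Context: Fix an integer $d\ge 2$ and constants $\kappa',\lambda',\delta'>0$, $V>0$. Indices are cyclic modulo $d$: $x_0:=x_d$, $x_{d+1}:=x_1$. $\mathbb{R}_+^d=[0,\infty)^d$, $|x|_1=\sum_i|x_i|$, $e_k$ standard basis, $e_{i,j}$ matrix unit. $b(x)=\sum_{k=1}^d e_k\big(\kappa'(x_{k-1}-x_{k+1})x_k+\lambda'-\delta'x_k\big)$; $\Gamma(x)=\sum_{k}e_{k,k}\big(\kappa'(x_{k-1}+x_{k+1})x_k+\lambda'+\delta'x_k\big)-\sum_k\kappa'x_kx_{k+1}(e_{k,k+1}+e_{k+1,k})$ (a symmetric $d\times d$ matrix). *)

(* Defs.v *)
From HB Require Import structures.
From mathcomp Require Import all_boot all_order all_algebra.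
From mathcomp Require Import all_classical all_reals all_analysis.
Set Implicit Arguments. Unset Strict Implicit. Unset Printing Implicit Defensive.
Import Order.TTheory GRing.Theory Num.Theory.
Import numFieldNormedType.Exports.
Local Open Scope classical_set_scope.
Local Open Scope ring_scope.

(* Points of R^d are row vectors x : 'rV[R]_d, coordinate k is x 0 k, k : 'I_d.
   Cyclic indices: x_{k-1} = x (ord_pred k), x_{k+1} = x (ordS k). *)

Section Model.
Variables (R : realType) (d : nat) (kap lam del V : R).

Definition ebasis (k : 'I_d) : 'rV[R]_d := delta_mx 0 k.

Definition orthant : set 'rV[R]_d := [set x | forall k : 'I_d, 0 <= x 0 k].

Definition drift (x : 'rV[R]_d) : 'rV[R]_d :=
  \sum_(k < d) (kap * (x 0 (ord_pred k) - x 0 (ordS k)) * x 0 k + lam - del * x 0 k)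
               *: ebasis k.

Definition Gamma (x : 'rV[R]_d) : 'M[R]_d :=
  \sum_(k < d) (kap * (x 0 (ord_pred k) + x 0 (ordS k)) * x 0 k + lam + del * x 0 k)
               *: delta_mx k k
  - \sum_(k < d) (kap * x 0 k * x 0 (ordS k)) *: (delta_mx k (ordS k) + delta_mx (ordS k) k).

Definition Lgen (f : 'rV[R]_d -> R) (x : 'rV[R]_d) : R :=
  (2 * V)^-1 * \sum_(i < d) \sum_(j < d)
      Gamma x i j * 'D_(ebasis i) ('D_(ebasis j) f) x
  + \sum_(i < d) drift x 0 i * 'D_(ebasis i) f x.

(* U(x) = (|x|_1 - d lam/del)^2, with |x|_1 = sum_i x_i on R_+^d *)
Definition Ulyap (x : 'rV[R]_d) : R :=
  (\sum_(i < d) x 0 i - d%:R * lam / del) ^+ 2.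

End Model.

(* Main.v *)
Require Import Defs.
From HB Require Import structures.
From mathcomp Require Import all_boot all_order all_algebra.
From mathcomp Require Import all_classical all_reals all_analysis.
From mathcomp Require Import ring lra.
Import Order.TTheory GRing.Theory Num.Theory.
Import numFieldNormedType.Exports.
Local Open Scope classical_set_scope.
Local Open Scope ring_scope.

Section S.
Variables (R : realType) (d : nat).

Lemma sum_shift (h : R) (y : 'rV[R]_d) j :
  \sum_(i < d) (h *: ebasis R j + y) 0 i = h + \sum_(i < d) y 0 i.
Proof.
rewrite /ebasis.
under eq_bigr do rewrite !mxE.
rewrite big_split /=; congr (_ + _).
rewrite (bigD1 j) //= big1 ?addr0; first by rewrite !eqxx mulr1.
by move=> i Hi; rewrite (negbTE Hi) /= mulr0.
Qed.

Lemma D_sum (G : R -> R) (y : 'rV[R]_d) j :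
  'D_(ebasis R j) (fun z : 'rV[R]_d => G (\sum_(i < d) z 0 i)) y = 'D_1 G (\sum_(i < d) y 0 i).
Proof.
rewrite /derive. set F := (fun h : R => _). set F2 := (fun h : R => _). suff -> : F = F2 by []. apply/funext => h; rewrite /F /F2 /=.
by rewrite sum_shift [h%:A]mulr1.
Qed.

Lemma DH n (m t : R) : 'D_1 (fun s : R => (s - m)^+n) t = n%:R * (t - m)^+n.-1.
Proof.
have -> : (fun s : R => (s - m)^+n) = (id - cst m) ^+ n.
  by apply/funext => s; rewrite exprfctE.
by rewrite derive_val /= subr0; exact: mulr1.

Qed.
Lemma sum_eq1 (F : 'I_d -> R) b : (forall j, j != b -> F j = 0) -> \sum_j F j = F b.
Proof. by move=> H; rewrite (bigD1 b) //= big1 ?addr0. Qed.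

Lemma tot_delta (c : R) (a b : 'I_d) :
  \sum_(i < d) \sum_(j < d) (c *: (delta_mx a b : 'M[R]_d)) i j = c.
Proof.
rewrite (@sum_eq1 _ a) => [|i Hi].
  rewrite (@sum_eq1 _ b) => [|j Hj]; first by rewrite !mxE !eqxx mulr1.
  by rewrite !mxE (negbTE Hj) andbF mulr0.
by apply: big1 => j _; rewrite !mxE (negbTE Hi) mulr0.
Qed.

Lemma row_delta (c : R) (k : 'I_d) :
  \sum_(i < d) (c *: (delta_mx 0 k : 'rV[R]_d)) 0 i = c.
Proof.
rewrite (@sum_eq1 _ k) => [|j Hj]; first by rewrite !mxE !eqxx mulr1.
by rewrite !mxE (negbTE Hj) andbF mulr0.
Qed.

Lemma tot_sum (F : 'I_d -> 'M[R]_d) :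
  \sum_(i < d) \sum_(j < d) (\sum_(k < d) F k) i j
  = \sum_(k < d) \sum_(i < d) \sum_(j < d) F k i j.
Proof.
under eq_bigr do under eq_bigr do rewrite summxE.
under eq_bigr do rewrite exchange_big.
by rewrite exchange_big.
Qed.

Lemma tot_sub (A B : 'M[R]_d) :
  \sum_(i < d) \sum_(j < d) (A - B) i j
  = \sum_(i < d) \sum_(j < d) A i j - \sum_(i < d) \sum_(j < d) B i j.
Proof.
rewrite -sumrB; apply: eq_bigr => i _; rewrite -sumrB.
by apply: eq_bigr => j _; rewrite !mxE.
Qed.

Lemma tot_add (A B : 'M[R]_d) :
  \sum_(i < d) \sum_(j < d) (A + B) i j
  = \sum_(i < d) \sum_(j < d) A i j + \sum_(i < d) \sum_(j < d) B i j.
Proof.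
rewrite -big_split; apply: eq_bigr => i _; rewrite -big_split.
by apply: eq_bigr => j _; rewrite !mxE.
Qed.

Lemma cyc (x : 'rV[R]_d) :
  \sum_(k < d) x 0 (ord_pred k) * x 0 k = \sum_(k < d) x 0 k * x 0 (ordS k).
Proof.
rewrite (reindex_inj (@ordS_inj d)) /=.
by apply: eq_bigr => k _; rewrite ordSK.
Qed.

Variables (kap lam del V : R).
Let s (x : 'rV[R]_d) := \sum_(i < d) x 0 i.

Lemma totGamma (x : 'rV[R]_d) :
  \sum_(i < d) \sum_(j < d) Gamma kap lam del x i j = d%:R * lam + del * s x.
Proof.
rewrite /Gamma tot_sub !tot_sum.
under eq_bigr do rewrite tot_delta.
under [X in _ - X]eq_bigr do rewrite scalerDr tot_add !tot_delta.
under eq_bigr do rewrite mulrDr mulrDl -!mulrA.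
under [X in _ - X]eq_bigr do rewrite -!mulrA.
rewrite !big_split /= -!mulr_sumr sumr_const card_ord cyc.
have -> : \sum_(i < d) x 0 (ordS i) * x 0 i = \sum_(i < d) x 0 i * x 0 (ordS i) by apply: eq_bigr => i _; rewrite mulrC.
rewrite /s -[lam *+ d]mulr_natl; ring.
Qed.

Lemma totdrift (x : 'rV[R]_d) :
  \sum_(i < d) drift kap lam del x 0 i = d%:R * lam - del * s x.
Proof.
rewrite /drift.
under eq_bigr do rewrite summxE.
rewrite exchange_big /=.
under eq_bigr do rewrite row_delta.
under eq_bigr do rewrite mulrBr mulrBl -!mulrA.
rewrite sumrB big_split sumrB /= -!mulr_sumr sumr_const card_ord cyc.
have -> : \sum_(i < d) x 0 (ordS i) * x 0 i = \sum_(i < d) x 0 i * x 0 (ordS i) by apply: eq_bigr => i _; rewrite mulrC.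
rewrite /s -[lam *+ d]mulr_natl; ring.
Qed.
Lemma Lgen_sum (G : R -> R) x :
  Lgen kap lam del V (fun z : 'rV[R]_d => G (\sum_(i < d) z 0 i)) x =
  (2 * V)^-1 * (d%:R * lam + del * s x) * 'D_1 ('D_1 G) (s x)
  + (d%:R * lam - del * s x) * 'D_1 G (s x).
Proof.
rewrite /Lgen.
have E : forall j, 'D_(ebasis R j) (fun z : 'rV[R]_d => G (\sum_(i < d) z 0 i))
   = fun y => 'D_1 G (\sum_(i < d) y 0 i).
  by move=> j; apply/funext => y; exact: D_sum.
under eq_bigr do under eq_bigr do rewrite E (D_sum ('D_1 G)).
under eq_bigr do rewrite -mulr_suml.
under [X in _ + X]eq_bigr do rewrite D_sum.
rewrite -mulr_suml -mulr_suml totGamma totdrift mulrA.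
done.
Qed.
Lemma DHc n (c m t : R) :
  'D_1 (fun s : R => c * (s - m)^+n) t = c * (n%:R * (t - m)^+n.-1).
Proof.
have -> : (fun s : R => c * (s - m)^+n) = c *: (id - cst m) ^+ n.
  by apply/funext => z; rewrite /= exprfctE.
by rewrite derive_val /= subr0; congr (_ * _); exact: mulr1.
Qed.

Lemma LUp p x :
  Lgen kap lam del V (fun y => Ulyap lam del y ^+ p) x =
  (2 * V)^-1 * (d%:R * lam + del * s x) *
    ((2 * p)%:R * ((2 * p).-1%:R * (s x - d%:R * lam / del) ^+ (2 * p).-1.-1))
  + (d%:R * lam - del * s x) * ((2 * p)%:R * (s x - d%:R * lam / del) ^+ (2 * p).-1).
Proof.
have -> : (fun y => Ulyap lam del y ^+ p) =
   (fun z : 'rV[R]_d => (fun t => (t - d%:R * lam / del) ^+ (2 * p)) (\sum_(i < d) z 0 i)).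
  by apply/funext => z; rewrite /Ulyap -exprM.
rewrite (Lgen_sum (fun t => (t - d%:R * lam / del) ^+ (2 * p))).
have -> : 'D_1 (fun t => (t - d%:R * lam / del) ^+ (2 * p)) =
   (fun t => (2 * p)%:R * (t - d%:R * lam / del) ^+ (2 * p).-1).
  by apply/funext => t; rewrite DH.
by rewrite DHc DH.
Qed.
End S.
Lemma key (R : realFieldType) q (A b m u : R) : 0 < A -> 0 < b -> 0 < m ->
  (u ^+ 2) ^+ q * (A * (u + 2 * m) - b * u ^+ 2)
  <= ((A ^+ 2 + 4 * A * b * m) / b ^+ 2) ^+ q * ((A ^+ 2 + 8 * A * b * m) / (4 * b)).
Proof.
move=> A0 b0 m0.
have Abm : 0 < A * b * m by rewrite !mulr_gt0.
have A2 : 0 < A ^+ 2 by rewrite exprn_gt0.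
have W0 : 0 <= (u ^+ 2) ^+ q by rewrite exprn_ge0 // sqr_ge0.
have B0 : 0 <= (A ^+ 2 + 4 * A * b * m) / b ^+ 2.
  by rewrite divr_ge0 // ?sqr_ge0 //; nra.
have Q0 : 0 <= (A ^+ 2 + 8 * A * b * m) / (4 * b).
  by rewrite divr_ge0 //; nra.
case: (lerP (A * (u + 2 * m) - b * u ^+ 2) 0) => HT.
  apply: (le_trans (y := 0)); last by rewrite mulr_ge0 // exprn_ge0.
  exact: (mulr_ge0_le0 W0 HT).
apply: ler_pM => //; first exact: ltW.
  apply: lerXn2r; rewrite ?nnegrE ?sqr_ge0 //.
  rewrite ler_pdivlMr ?exprn_gt0 //.
  have h1 := sqr_ge0 (A - b * u).
  have h2 : 0 < b * (A * (u + 2 * m) - b * u ^+ 2) by rewrite mulr_gt0.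
  nra.
rewrite ler_pdivlMr; last by rewrite mulr_gt0.
have h1 := sqr_ge0 (A - 2 * b * u).
nra.
Qed.

Theorem part1 (R : realType) (d : nat) (kap lam del V : R) :
  (2 <= d)%N -> 0 < kap -> 0 < lam -> 0 < del -> 0 < V ->
  (forall p : nat, exists c c' : R, 0 < c /\ 0 < c' /\
     forall x : 'rV[R]_d, orthant x ->
       Lgen kap lam del V (fun y => Ulyap lam del y ^+ p) x
         <= - c * Ulyap lam del x ^+ p + c').
Proof.
move=> hd hk hl hdl hV.
have d0 : (0 : R) < d%:R by rewrite ltr0n; apply: leq_trans hd.
have m0 : 0 < d%:R * lam / del by rewrite !(mulr_gt0, invr_gt0).
case => [|q].
  exists 1, 2; split => //; split => // x _.
  rewrite LUp muln0 /= !mul0r mulr0 addr0 expr0; lra.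
set m := d%:R * lam / del.
have m1 : 0 < m := m0.
have Hdm : d%:R * lam = del * m.
  by rewrite /m [RHS]mulrC divfK // gt_eqF.
set A := (2 * V)^-1 * del * (2 * q%:R + 2) * (2 * q%:R + 1).
set b := (2 * q%:R + 1) * del.
have A0 : 0 < A by rewrite /A !mulr_gt0 ?invr_gt0 ?mulr_gt0 //; lra.
have b0 : 0 < b by rewrite /b mulr_gt0 //; lra.
set K0 := ((A ^+ 2 + 4 * A * b * m) / b ^+ 2) ^+ q * ((A ^+ 2 + 8 * A * b * m) / (4 * b)).
have K00 : 0 <= K0.
  rewrite /K0; clearbody A b m.
  have Abm := mulr_gt0 (mulr_gt0 A0 b0) m1.
  have A2 : 0 <= A ^+ 2 by rewrite sqr_ge0.
  rewrite mulr_ge0 // ?exprn_ge0 // divr_ge0 // ?sqr_ge0 // ?mulr_ge0 //; try nra.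

exists del, (K0 + 1); split => //; split; first lra.
move=> x _.
rewrite LUp.
have e1 : (2 * q.+1).-1.-1 = (2 * q)%N by rewrite mulnS add2n.
have e2 : (2 * q.+1).-1 = (2 * q).+1 by rewrite mulnS add2n.
have n1 : (2 * q.+1)%:R = 2 * q%:R + 2 :> R.
  rewrite natrM -natr1; ring.
have n2 : ((2 * q).+1)%:R = 2 * q%:R + 1 :> R.
  rewrite -natr1 natrM; ring.
rewrite e1 e2 n1 n2 /Ulyap -/m exprS !exprM Hdm.
set u := \sum_(i < d) x 0 i - m.
have Hk := @key R q A b m u A0 b0 m1.
rewrite -/K0 in Hk.
set W := (u ^+ 2) ^+ q in Hk *.
have -> : \sum_(i < d) x 0 i = u + m by rewrite /u subrK.
have -> : (u ^+ 2) ^+ q.+1 = u ^+ 2 * W by rewrite exprS.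
suff -> : (2 * V)^-1 * (del * m + del * (u + m)) * ((2 * q%:R + 2) * ((2 * q%:R + 1) * W)) +
  (del * m - del * (u + m)) * ((2 * q%:R + 2) * (u * W)) =
  W * (A * (u + 2 * m) - b * u ^+ 2) - del * (u ^+ 2 * W) by lra.
rewrite /A /b; ring.
Qed.

Theorem part2 (R : realType) (d : nat) (kap lam del V : R) :
  (2 <= d)%N -> 0 < kap -> 0 < lam -> 0 < del -> 0 < V ->
  (exists (K : set 'rV[R]_d) (f : 'rV[R]_d -> R) (c1 c2 : R),
     compact K /\ K `<=` @orthant R d /\
     (forall x, orthant x -> 1 <= f x) /\ 0 < c1 /\ 0 < c2 /\
     forall x : 'rV[R]_d, orthant x ->
       Lgen kap lam del V (Ulyap lam del) x <= - c1 * f x + c2 * (\1_K x : R)).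
Proof.
move=> hd hk hl hdl hV.
have d0 : (0 : R) < d%:R by rewrite ltr0n; apply: leq_trans hd.
have m0 : 0 < d%:R * lam / del by rewrite !(mulr_gt0, invr_gt0).
set m := d%:R * lam / del.
have m1 : 0 < m := m0.
have Hdm : d%:R * lam = del * m.
  by rewrite /m [RHS]mulrC divfK // gt_eqF.
set A := (2 * V)^-1 * del * 2.
have A0 : 0 < A by rewrite /A !mulr_gt0 ?invr_gt0 ?mulr_gt0.
set K0 := ((A ^+ 2 + 4 * A * del * m) / del ^+ 2) ^+ 0 * ((A ^+ 2 + 8 * A * del * m) / (4 * del)).
have K00 : 0 <= K0.
  rewrite /K0; clearbody A m.
  have Abm := mulr_gt0 (mulr_gt0 A0 hdl) m1.
  have A2 : 0 <= A ^+ 2 by rewrite sqr_ge0.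
  rewrite mulr_ge0 // ?exprn_ge0 // divr_ge0 // ?sqr_ge0 // ?mulr_ge0 //; try nra.
have HL : forall x : 'rV[R]_d, Lgen kap lam del V (Ulyap lam del) x <=
    K0 - del * (\sum_(i < d) x 0 i - m) ^+ 2.
  move=> x.
  have -> : @Ulyap R d lam del = (fun y => Ulyap lam del y ^+ 1).
    by apply/funext => y; rewrite expr1.
  rewrite LUp /= -/m Hdm.
  set u := \sum_(i < d) x 0 i - m.
  have Hk := @key R 0 A del m u A0 hdl m1.
  rewrite -/K0 expr0 mul1r in Hk.
  have -> : \sum_(i < d) x 0 i = u + m by rewrite /u subrK.
  rewrite !muln1 ?mul0n expr0 expr1.
  apply: (le_trans (y := (A * (u + 2 * m) - del * u ^+ 2) - del * u ^+ 2)); last by lra.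
  rewrite le_eqVlt; apply/orP; left; apply/eqP; rewrite /A; ring.
set M := m + (K0 + 1) / del + 1.
have M0 : 0 <= M.
  rewrite /M; have : 0 <= (K0 + 1) / del by rewrite divr_ge0 //; lra.
  lra.
exists [set v : 'rV[R]_d | forall i, `[0, M]%classic (v ord0 i)], (fun _ => 1), 1, (K0 + 1).
split; first (have H := (@rV_compact R d (fun _ => `[0, M]%classic) (fun _ => @segment_compact R 0 M)); exact H).
split.
  by move=> v /= Hv i; have := Hv i; rewrite /= in_itv /= => /andP[].
split => //; split => //; split; first lra.
move=> x Ox; apply: (le_trans (HL x)).
case: (pselect ([set v : 'rV[R]_d | forall i, `[0, M]%classic (v ord0 i)] x)) => Kx.
  rewrite indicE (mem_set Kx) /= mulr1.
  have := mulr_ge0 (ltW hdl) (sqr_ge0 (\sum_(i < d) x 0 i - m)); lra.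
rewrite indicE (memNset Kx) /= mulr0 addr0 mulr1.
move: Kx => /= /existsNP [i Hi].
have Mi : M < x 0 i.
  rewrite ltNge; apply/negP => H; apply: Hi; rewrite /= in_itv /= H andbT.
  exact: Ox.
have Si : x 0 i <= \sum_(j < d) x 0 j.
  rewrite (bigD1 i) //= lerDl; apply: sumr_ge0 => j _; exact: Ox.
set u := \sum_(i < d) x 0 i - m.
have u1 : (K0 + 1) / del + 1 < u by rewrite /u; move: Mi Si; rewrite /M; lra.
have : K0 + 1 < del * u.
  rewrite -ltr_pdivrMl //; move: u1; rewrite mulrC; lra.
have : 0 <= (K0 + 1) / del by rewrite divr_ge0 //; lra.
nra.
Qed.

Theorem lemma4p2 (R : realType) (d : nat) (kap lam del V : R) :
  (2 <= d)%N -> 0 < kap -> 0 < lam -> 0 < del -> 0 < V ->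
  (forall p : nat, exists c c' : R, 0 < c /\ 0 < c' /\
     forall x : 'rV[R]_d, orthant x ->
       Lgen kap lam del V (fun y => Ulyap lam del y ^+ p) x
         <= - c * Ulyap lam del x ^+ p + c')
  /\
  (exists (K : set 'rV[R]_d) (f : 'rV[R]_d -> R) (c1 c2 : R),
     compact K /\ K `<=` @orthant R d /\
     (forall x, orthant x -> 1 <= f x) /\ 0 < c1 /\ 0 < c2 /\
     forall x : 'rV[R]_d, orthant x ->
       Lgen kap lam del V (Ulyap lam del) x <= - c1 * f x + c2 * (\1_K x : R)).
Proof.
move=> hd hk hl hdl hV; split.
  exact: part1.
exact: part2.
Qed.
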